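(* Let $\kappa$ be an infinite cardinal and let $\alpha$ be an uncountable cardinal with $\alpha\leq\kappa^+$. Let $h:P(\kappa,\alpha)\to\mathbb{Z}$ be a group homomorphism. Then there are only finitely many $\xi\in\kappa$ such that $h(e_\xi)\neq0$.
   Context: $\mathbb{Z}^\kappa$ is the group of functions $x:\kappa\to\mathbb{Z}$ under pointwise addition, $\mathrm{supp}(x)=\{\xi\in\kappa:x(\xi)\neq0\}$, and $P(\kappa,\alpha)=\{x\in\mathbb{Z}^\kappa:|\mathrm{supp}(x)|<\alpha\}$. For $\xi\in\kappa$, $e_\xi\in P(\kappa,\alpha)$ is defined by $e_\xi(\xi)=1$ and $e_\xi(\eta)=0$ for $\eta\neq\xi$. *)

(* Defs.v *)
(* Cardinals are represented by types; cardinal comparison via injections. *)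
From Stdlib Require Import ZArith List ClassicalEpsilon.
Open Scope Z_scope.

Definition card_le (A B : Type) : Prop := exists f : A -> B, forall a a', f a = f a' -> a = a'.
Definition card_lt (A B : Type) : Prop := card_le A B /\ ~ card_le B A.

Definition infinite_card (K : Type) : Prop := card_le nat K.
Definition uncountable_card (A : Type) : Prop := ~ card_le A nat.

Definition is_succ_card (K L : Type) : Prop :=
  card_lt K L /\ forall M : Type, card_lt K M -> card_le L M.

Definition supp {K : Type} (x : K -> Z) : Type := { xi : K | x xi <> 0 }.

(* x \in P(kappa, alpha), alpha = |A| *)
Definition inP (K A : Type) (x : K -> Z) : Prop := card_lt (supp x) A.

Definition zadd {K : Type} (x y : K -> Z) : K -> Z := fun xi => x xi + y xi.

Definition e {K : Type} (xi : K) : K -> Z :=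
  fun eta => if excluded_middle_informative (eta = xi) then 1 else 0.

(* Main.v *)
Require Import Defs.
From Stdlib Require Import ZArith List Lia Classical ClassicalEpsilon FunctionalExtensionality ProofIrrelevance.
Open Scope Z_scope.

Section Seq.
Variable T : Type.
Variable P : T -> Prop.
Hypothesis H : forall l : list T, exists t, P t /\ ~ In t l.
Definition pick (l : list T) : T := proj1_sig (constructive_indefinite_description _ (H l)).
Lemma pick_spec l : P (pick l) /\ ~ In (pick l) l.
Proof. unfold pick. destruct (constructive_indefinite_description _ (H l)); auto. Qed.
Fixpoint LL (n : nat) : list T := match n with O => nil | S n => pick (LL n) :: LL n end.
Lemma LL_in k n : (k < n)%nat -> In (pick (LL k)) (LL n).
Proof.
  induction n; intros Hk; [lia|]. simpl. destruct (Nat.eq_dec k n) as [->|]; [now left|].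
  right; apply IHn; lia.
Qed.
Lemma inf_seq : exists s : nat -> T, (forall a b, s a = s b -> a = b) /\ forall n, P (s n).
Proof.
  exists (fun n => pick (LL n)). split.
  - intros a b E. destruct (Nat.lt_total a b) as [Hab|[Hab|Hab]]; auto.
    + exfalso. apply (proj2 (pick_spec (LL b))). rewrite <- E. now apply LL_in.
    + exfalso. apply (proj2 (pick_spec (LL a))). rewrite E. now apply LL_in.
  - intros n; apply pick_spec.
Qed.
End Seq.

Fixpoint pos {A : Type} (l : list A) (a : A) : nat :=
  match l with nil => O | x :: l => if excluded_middle_informative (x = a) then O else S (pos l a) end.
Lemma pos_inj {A : Type} (l : list A) a b : In a l -> In b l -> pos l a = pos l b -> a = b.
Proof.
  induction l as [|x l IH]; simpl; [tauto|].
  destruct (excluded_middle_informative (x = a)), (excluded_middle_informative (x = b)); try congruence.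
  intros [|] [|] E; try congruence. injection E; auto.
Qed.

Lemma nat_le_of (A : Type) : ~ card_le A nat -> card_le nat A.
Proof.
  intros HA. destruct (classic (exists l : list A, forall a, In a l)) as [[l Hl]|Hn].
  - exfalso; apply HA. exists (pos l). intros; apply (pos_inj l); auto.
  - destruct (inf_seq A (fun _ => True)) as [s [Hs _]].
    + intros l. apply NNPP; intros C. apply Hn. exists l. intros a.
      apply NNPP; intros C2. apply C; eauto.
    + exists s; auto.
Qed.

Section ZN.
Variable g : (nat -> Z) -> Z.
Hypothesis gadd : forall u v, g (fun k => u k + v k) = g u + g v.
Definition delta (n : nat) : nat -> Z := fun k => if Nat.eq_dec k n then 1 else 0.
Hypothesis dnz : forall n, g (delta n) <> 0.

Lemma g0 : g (fun _ => 0) = 0.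
Proof. pose proof (gadd (fun _ => 0) (fun _ => 0)). simpl in H. lia. Qed.

Lemma gscal_nat (c : nat) u : g (fun k => Z.of_nat c * u k) = Z.of_nat c * g u.
Proof.
  induction c.
  - simpl. exact g0.
  - replace (fun k => Z.of_nat (S c) * u k) with (fun k => Z.of_nat c * u k + u k)
      by (extensionality k; lia). rewrite gadd, IHc. lia.
Qed.
Lemma gscal c u : 0 <= c -> g (fun k => c * u k) = c * g u.
Proof. intros. rewrite <- (Z2Nat.id c) by lia. apply gscal_nat. Qed.

Definition dd n := g (delta n).
Fixpoint F (n : nat) : Z * Z := match n with
  | O => (1, 0)
  | S n => let (m, s) := F n in let s' := s + m * Z.abs (dd n) in (m * (2 * s' + 2), s') end.
Definition mm n := fst (F n).
Definition SS n := snd (F n).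
Lemma SS_S n : SS (S n) = SS n + mm n * Z.abs (dd n).
Proof. unfold SS, mm; simpl. destruct (F n); reflexivity. Qed.
Lemma mm_S n : mm (S n) = mm n * (2 * SS (S n) + 2).
Proof. unfold SS, mm; simpl. destruct (F n); reflexivity. Qed.
Lemma bounds n : 0 <= SS n /\ Z.of_nat n + 1 <= mm n /\ 2 * SS n < mm n.
Proof.
  induction n. { unfold SS, mm; simpl; lia. }
  rewrite mm_S, SS_S. pose proof (Z.abs_nonneg (dd n)).
  assert (0 <= mm n * Z.abs (dd n)) by nia.
  set (t := mm n * Z.abs (dd n)) in *. set (S0 := SS n) in *. set (m := mm n) in *.
  rewrite Nat2Z.inj_succ. nia.
Qed.
Lemma mm_div n k : (n <= k)%nat -> (mm n | mm k).
Proof.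
  induction 1. apply Z.divide_refl. rewrite mm_S. apply Z.divide_mul_l; auto.
Qed.
Definition PP n : nat -> Z := fun k => if lt_dec k n then mm k else 0.
Lemma gPP n : Z.abs (g (PP n)) <= SS n.
Proof.
  induction n.
  - unfold PP. replace (fun k : nat => if lt_dec k 0 then mm k else 0) with (fun _ : nat => 0).
    rewrite g0. unfold SS; simpl; lia. extensionality k. destruct (lt_dec k 0); lia.
  - replace (PP (S n)) with (fun k => PP n k + mm n * delta n k).
    + rewrite gadd, gscal by (pose proof (bounds n); lia). rewrite SS_S.
      fold (dd n).
      pose proof (Z.abs_triangle (g (PP n)) (mm n * dd n)) as Ht. rewrite Z.abs_mul in Ht.
      pose proof (bounds n). rewrite (Z.abs_eq (mm n)) in Ht by lia. lia.
    + extensionality k. unfold PP, delta. destruct (lt_dec k n), (lt_dec k (S n)), (Nat.eq_dec k n); subst; lia.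
Qed.
Definition YY n : nat -> Z := fun k => if lt_dec k n then 0 else mm k / mm n.
Lemma split_m n : g mm = g (PP n) + mm n * g (YY n).
Proof.
  rewrite <- gscal by (pose proof (bounds n); lia). rewrite <- gadd. f_equal.
  extensionality k. unfold PP, YY. destruct (lt_dec k n). lia.
  destruct (mm_div n k) as [q Hq]; [lia|]. pose proof (bounds n).
  rewrite Hq, Z.div_mul by lia. lia.
Qed.
Lemma mm_mono n : mm n <= mm (S n).
Proof. rewrite mm_S. pose proof (bounds n); pose proof (bounds (S n)). nia. Qed.
Lemma YY0 n : 2 * Z.abs (g mm) < mm n -> g (YY n) = 0.
Proof.
  intros Hn. pose proof (split_m n). pose proof (gPP n). pose proof (bounds n).
  set (y := g (YY n)) in *. set (a := g mm) in *. set (b := g (PP n)) in *.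
  destruct (Z.lt_total y 0) as [Hy|[Hy|Hy]]; auto; exfalso.
  - assert (mm n * y <= - mm n) by nia. lia.
  - assert (mm n * y >= mm n) by nia. lia.
Qed.
Lemma ZN_false : False.
Proof.
  set (N := Z.to_nat (2 * Z.abs (g mm))).
  assert (H1 : 2 * Z.abs (g mm) < mm N) by (pose proof (bounds N) as B; unfold N in *; rewrite Z2Nat.id in B by lia; lia).
  assert (H2 : 2 * Z.abs (g mm) < mm (S N)) by (pose proof (mm_mono N); lia).
  pose proof (split_m N) as E1. pose proof (split_m (S N)) as E2.
  rewrite YY0 in E1, E2 by auto.
  replace (PP (S N)) with (fun k => PP N k + mm N * delta N k) in E2.
  - rewrite gadd, gscal in E2 by (pose proof (bounds N); lia).
    pose proof (dnz N). pose proof (bounds N). nia.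
  - extensionality k. unfold PP, delta. destruct (lt_dec k N), (lt_dec k (S N)), (Nat.eq_dec k N); subst; lia.
Qed.
End ZN.

Section Red.
Variable K : Type.
Variable s : nat -> K.
Hypothesis sinj : forall a b, s a = s b -> a = b.
Definition vec (u : nat -> Z) : K -> Z := fun xi =>
  match excluded_middle_informative (exists k, s k = xi) with
  | left H => u (proj1_sig (constructive_indefinite_description _ H))
  | right _ => 0 end.
Lemma vec_add u v : vec (fun k => u k + v k) = zadd (vec u) (vec v).
Proof. extensionality xi. unfold vec, zadd. destruct excluded_middle_informative; auto. Qed.
Lemma vec_delta n : vec (delta n) = e (s n).
Proof.
  extensionality xi. unfold vec, e, delta.
  destruct (excluded_middle_informative (exists k, s k = xi)) as [Hx|Hx].
  - destruct (constructive_indefinite_description _ Hx) as [k Hk]; simpl.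
    destruct (Nat.eq_dec k n) as [E1|E1], (excluded_middle_informative (xi = s n)) as [E2|E2]; subst; auto.
    all: try congruence. apply sinj in E2; congruence.
  - destruct (excluded_middle_informative (xi = s n)); auto. exfalso; eauto.
Qed.
Lemma supp_vec_le u : card_le (supp (vec u)) nat.
Proof.
  exists (fun p => match excluded_middle_informative (exists k, s k = proj1_sig p) with
    | left H => proj1_sig (constructive_indefinite_description _ H) | right _ => O end).
  intros [a Ha] [b Hb]; simpl.
  destruct (excluded_middle_informative (exists k, s k = a)) as [Xa|Xa].
  2:{ exfalso. apply Ha. unfold vec. destruct excluded_middle_informative; tauto. }
  destruct (excluded_middle_informative (exists k, s k = b)) as [Xb|Xb].
  2:{ exfalso. apply Hb. unfold vec. destruct excluded_middle_informative; tauto. }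
  destruct (constructive_indefinite_description _ Xa) as [ka Ka].
  destruct (constructive_indefinite_description _ Xb) as [kb Kb]. simpl.
  intros ->. subst. f_equal. apply proof_irrelevance.
Qed.
End Red.

Theorem mainTheorem7 (K A L : Type)
  (HK : infinite_card K) (HA : uncountable_card A)
  (HL : is_succ_card K L) (HAL : card_le A L)
  (h : (K -> Z) -> Z)
  (hhom : forall x y, inP K A x -> inP K A y -> h (zadd x y) = h x + h y) :
  exists s : list K, forall xi : K, h (e xi) <> 0 -> In xi s.
Proof.
  apply NNPP; intros Hno.
  assert (Hl : forall l : list K, exists t, h (e t) <> 0 /\ ~ In t l).
  { intros l. apply NNPP; intros C. apply Hno. exists l. intros xi Hxi.
    apply NNPP; intros C2. apply C; eauto. }
  destruct (inf_seq K _ Hl) as [s [sinj Hs]].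
  destruct (nat_le_of A HA) as [j Hj].
  assert (Hin : forall u, inP K A (vec K s u)).
  { intros u. destruct (supp_vec_le K s u) as [f Hf]. split.
    - exists (fun p => j (f p)). auto.
    - intros [k Hk]. apply HA. exists (fun a => f (k a)). auto. }
  apply (ZN_false (fun u => h (vec K s u))).
  - intros u v. rewrite vec_add by auto. apply hhom; auto.
  - intros n. simpl. rewrite vec_delta by auto. apply Hs.
Qed.
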